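(* Let $ABC$ be a triangle with side lengths $a,b,c$, semiperimeter $s$, circumcenter $O$ and circumradius $R$. Let $P$ be a point with barycentric coordinates $t_1:t_2:t_3$ with respect to $ABC$, where $t_1,t_2,t_3>0$, and let $t=t_1+t_2+t_3$. Then $$R^2-OP^2\ge\frac{4s^2\,t_1t_2t_3}{t^3},$$ with equality if and only if $t_1:t_2:t_3=a:b:c$, i.e. $P$ is the incenter of $ABC$.
   Context: A point $P$ has barycentric coordinates $t_1:t_2:t_3$ (with $t_1+t_2+t_3\neq0$) with respect to triangle $ABC$ if $P=\frac{t_1A+t_2B+t_3C}{t_1+t_2+t_3}$ (as vectors). *)

(* Defs.v *)
From Stdlib Require Import Reals.
Open Scope R_scope.

Definition pt := (R * R)%type.

Definition dist2 (P Q : pt) : R :=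
  (fst P - fst Q) ^ 2 + (snd P - snd Q) ^ 2.

Definition edist (P Q : pt) : R := sqrt (dist2 P Q).

Definition noncollinear (A B C : pt) : Prop :=
  (fst B - fst A) * (snd C - snd A) - (snd B - snd A) * (fst C - fst A) <> 0.

Definition is_circumcenter (O A B C : pt) : Prop :=
  edist O A = edist O B /\ edist O A = edist O C.

Definition bary (A B C : pt) (t1 t2 t3 : R) : pt :=
  ((t1 * fst A + t2 * fst B + t3 * fst C) / (t1 + t2 + t3),
   (t1 * snd A + t2 * snd B + t3 * snd C) / (t1 + t2 + t3)).

(* Main.v *)
Require Import Defs.
From Stdlib Require Import Reals Lra Psatz.
Open Scope R_scope.

Lemma gen_id (A B C O : pt) x y z : x + y + z <> 0 ->
  dist2 O (bary A B C x y z) =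
  (x * dist2 O A + y * dist2 O B + z * dist2 O C) / (x+y+z)
  - (x*y*dist2 A B + y*z*dist2 B C + z*x*dist2 C A) / (x+y+z)^2.
Proof.
  intro H. destruct A as [a1 a2], B as [b1 b2], C as [c1 c2], O as [o1 o2].
  unfold dist2, bary; simpl. field. auto.
Qed.

Lemma sq_edist P Q : edist P Q ^ 2 = dist2 P Q.
Proof.
  unfold edist. rewrite pow2_sqrt; [reflexivity|]. unfold dist2. apply Rplus_le_le_0_compat; apply pow2_ge_0.
Qed.

Lemma edist_pos P Q : P <> Q -> 0 < edist P Q.
Proof.
  intro H. unfold edist. apply sqrt_lt_R0. unfold dist2.
  destruct P as [p1 p2], Q as [q1 q2]; simpl.
  destruct (Req_dec p1 q1); destruct (Req_dec p2 q2); subst; try congruence; nra.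
Qed.

Lemma edist_ge0 P Q : 0 <= edist P Q.
Proof. unfold edist; apply sqrt_pos. Qed.

Theorem mainTheorem3 (A B C O : pt) (t1 t2 t3 : R) :
  noncollinear A B C ->
  is_circumcenter O A B C ->
  0 < t1 -> 0 < t2 -> 0 < t3 ->
  let a := edist B C in
  let b := edist C A in
  let c := edist A B in
  let s := (a + b + c) / 2 in
  let Rc := edist O A in
  let t := t1 + t2 + t3 in
  let P := bary A B C t1 t2 t3 in
  Rc ^ 2 - edist O P ^ 2 >= 4 * s ^ 2 * (t1 * t2 * t3) / t ^ 3 /\
  (Rc ^ 2 - edist O P ^ 2 = 4 * s ^ 2 * (t1 * t2 * t3) / t ^ 3 <->
   exists k : R, t1 = k * a /\ t2 = k * b /\ t3 = k * c).
Proof.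
  intros Hnc [HB HC] h1 h2 h3 a b c s Rc t P.
  assert (Ht : 0 < t) by (unfold t; lra).
  assert (EB : dist2 O B = dist2 O A) by (rewrite <- !sq_edist, HB; reflexivity).
  assert (EC : dist2 O C = dist2 O A) by (rewrite <- !sq_edist, HC; reflexivity).
  assert (Ea : a ^ 2 = dist2 B C) by apply sq_edist.
  assert (Eb : b ^ 2 = dist2 C A) by apply sq_edist.
  assert (Ec : c ^ 2 = dist2 A B) by apply sq_edist.
  assert (KEY : Rc ^ 2 - edist O P ^ 2 - 4 * s ^ 2 * (t1 * t2 * t3) / t ^ 3 =
     (t3 * (t1*b - t2*a)^2 + t1 * (t2*c - t3*b)^2 + t2 * (t1*c - t3*a)^2) / t^3).
  { unfold Rc, P. rewrite !sq_edist, gen_id by lra. fold t.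
    rewrite EB, EC, <- Ea, <- Eb, <- Ec. unfold s, t. field. lra. }
  assert (Hpos : 0 < t ^ 3) by (apply pow_lt; lra).
  assert (Hnum : 0 <= t3 * (t1*b - t2*a)^2 + t1 * (t2*c - t3*b)^2 + t2 * (t1*c - t3*a)^2) by (repeat apply Rplus_le_le_0_compat; apply Rmult_le_pos; try lra; apply pow2_ge_0).
  split.
  - assert (0 <= (t3 * (t1*b - t2*a)^2 + t1 * (t2*c - t3*b)^2 + t2 * (t1*c - t3*a)^2) / t^3)
      by (unfold Rdiv; apply Rmult_le_pos; [lra|left; apply Rinv_0_lt_compat; lra]). lra.
  - split.
    + intro Heq.
      assert (Z : t3 * (t1*b - t2*a)^2 + t1 * (t2*c - t3*b)^2 + t2 * (t1*c - t3*a)^2 = 0).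
      { assert (W : (t3 * (t1*b - t2*a)^2 + t1 * (t2*c - t3*b)^2 + t2 * (t1*c - t3*a)^2) / t^3 = 0) by lra.
        unfold Rdiv in W. apply Rmult_integral in W. destruct W as [W|W]; auto.
        exfalso. apply Rinv_neq_0_compat in W; lra. }
      assert (P1 : 0 <= t3 * (t1*b - t2*a)^2) by (apply Rmult_le_pos; [lra|apply pow2_ge_0]).
      assert (P2 : 0 <= t1 * (t2*c - t3*b)^2) by (apply Rmult_le_pos; [lra|apply pow2_ge_0]).
      assert (P3 : 0 <= t2 * (t1*c - t3*a)^2) by (apply Rmult_le_pos; [lra|apply pow2_ge_0]).
      assert (Q1 : t3 * (t1*b - t2*a)^2 = 0) by lra.
      assert (Q2 : t1 * (t2*c - t3*b)^2 = 0) by lra.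
      assert (Q3 : t2 * (t1*c - t3*a)^2 = 0) by lra.
      assert (Z1 : t1*b - t2*a = 0).
      { apply Rmult_integral in Q1; destruct Q1 as [q|q]; [lra|]. simpl in q; nra. }
      assert (Z2 : t2*c - t3*b = 0).
      { apply Rmult_integral in Q2; destruct Q2 as [q|q]; [lra|]. simpl in q; nra. }
      assert (Z3 : t1*c - t3*a = 0).
      { apply Rmult_integral in Q3; destruct Q3 as [q|q]; [lra|]. simpl in q; nra. }
      assert (BC : B <> C) by (intro e; subst; apply Hnc; ring).
      assert (Ha : 0 < a) by (apply edist_pos; auto).
      exists (t1 / a). split; [field; lra|]. split.
      * apply Rmult_eq_reg_l with a; [|lra]. field_simplify; lra.
      * apply Rmult_eq_reg_l with a; [|lra]. field_simplify; lra.
    + intros [k [e1 [e2 e3]]].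
      assert (0 = (t3 * (t1*b - t2*a)^2 + t1 * (t2*c - t3*b)^2 + t2 * (t1*c - t3*a)^2) / t^3).
      { rewrite e1, e2, e3. unfold Rdiv. ring. }
      lra.
Qed.
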